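(* A double category $\mathbb{A}$ is cofibrant in the model structure on $\mathrm{DblCat}$ right-induced along $(\mathbf{H},\mathcal{V})$ from two copies of the Lack model structure if and only if its underlying horizontal category $U\mathbf{H}\mathbb{A}$ is free (on a graph) and its underlying vertical category $U\mathbf{V}\mathbb{A}$ is a disjoint union of copies of $\mathbbm{1}$ and $\mathbbm{2}$.
   Context: The model structure on $\mathrm{DblCat}$ in question has weak equivalences the double functors $F$ with $\mathbf{H}F$ and $\mathcal{V}F$ biequivalences and fibrations those with $\mathbf{H}F$, $\mathcal{V}F$ Lack fibrations ($\mathbf{H}$: underlying horizontal 2-category; $\mathcal{V}$: 2-category of vertical morphisms, squares, and pairs of globular squares as 2-cells). Its trivial fibrations are the double functors surjective on objects, full on horizontal morphisms, surjective on vertical morphisms, and fully faithful on squares; cofibrant means $\emptyset\to\mathbb{A}$ has the left lifting property against these. $U\mathbf{H}\mathbb{A}$ is the category of objects and horizontal morphisms of $\mathbb{A}$, $U\mathbf{V}\mathbb{A}$ the category of objects and vertical morphisms. $\mathbbm{1}$ is the terminal category, $\mathbbm{2}=\{0\to1\}$. *)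

(* Defs.v *)
From mathcomp Require Import ssreflect ssrfun ssrbool.
From Stdlib Require Import List.

Set Implicit Arguments.
Unset Strict Implicit.
Unset Printing Implicit Defensive.

(* Strict double categories (internal categories in Cat), presented by their
   four sorts (objects, horizontal morphisms, vertical morphisms, squares)
   with boundary maps.  Composites take a proof that the boundaries match;
   all axioms are quantified over every such proof.                          *)

Record DblCat := {
  Ob : Type;
  Hor : Type;
  hs : Hor -> Ob;  ht : Hor -> Ob;
  hid : Ob -> Hor;
  hcomp : forall f g : Hor, ht f = hs g -> Hor;
  Ver : Type;
  vs : Ver -> Ob;  vt : Ver -> Ob;
  vid : Ob -> Ver;
  vcomp : forall u v : Ver, vt u = vs v -> Ver;
  Sq : Type;
  sl : Sq -> Ver;  sr : Sq -> Ver;  st : Sq -> Hor;  sb : Sq -> Hor;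
  hsq_id : Ver -> Sq;
  vsq_id : Hor -> Sq;
  hsq_comp : forall a b : Sq, sr a = sl b -> Sq;
  vsq_comp : forall a b : Sq, sb a = st b -> Sq;

  sq_tl : forall a, hs (st a) = vs (sl a);
  sq_tr : forall a, ht (st a) = vs (sr a);
  sq_bl : forall a, hs (sb a) = vt (sl a);
  sq_br : forall a, ht (sb a) = vt (sr a);

  hid_s : forall x, hs (hid x) = x;
  hid_t : forall x, ht (hid x) = x;
  hcomp_s : forall f g e, hs (@hcomp f g e) = hs f;
  hcomp_t : forall f g e, ht (@hcomp f g e) = ht g;
  hcomp_id_l : forall f e, @hcomp (hid (hs f)) f e = f;
  hcomp_id_r : forall f e, @hcomp f (hid (ht f)) e = f;
  hcomp_assoc : forall f g h e1 e2 e3 e4,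
      @hcomp (@hcomp f g e1) h e2 = @hcomp f (@hcomp g h e3) e4;

  vid_s : forall x, vs (vid x) = x;
  vid_t : forall x, vt (vid x) = x;
  vcomp_s : forall u v e, vs (@vcomp u v e) = vs u;
  vcomp_t : forall u v e, vt (@vcomp u v e) = vt v;
  vcomp_id_l : forall u e, @vcomp (vid (vs u)) u e = u;
  vcomp_id_r : forall u e, @vcomp u (vid (vt u)) e = u;
  vcomp_assoc : forall u v w e1 e2 e3 e4,
      @vcomp (@vcomp u v e1) w e2 = @vcomp u (@vcomp v w e3) e4;

  hsq_id_l : forall u, sl (hsq_id u) = u;
  hsq_id_r : forall u, sr (hsq_id u) = u;
  hsq_id_t : forall u, st (hsq_id u) = hid (vs u);
  hsq_id_b : forall u, sb (hsq_id u) = hid (vt u);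
  vsq_id_l : forall f, sl (vsq_id f) = vid (hs f);
  vsq_id_r : forall f, sr (vsq_id f) = vid (ht f);
  vsq_id_t : forall f, st (vsq_id f) = f;
  vsq_id_b : forall f, sb (vsq_id f) = f;

  hsq_comp_l : forall a b e, sl (@hsq_comp a b e) = sl a;
  hsq_comp_r : forall a b e, sr (@hsq_comp a b e) = sr b;
  hsq_comp_t : forall a b e e', st (@hsq_comp a b e) = @hcomp (st a) (st b) e';
  hsq_comp_b : forall a b e e', sb (@hsq_comp a b e) = @hcomp (sb a) (sb b) e';
  vsq_comp_t : forall a b e, st (@vsq_comp a b e) = st a;
  vsq_comp_b : forall a b e, sb (@vsq_comp a b e) = sb b;
  vsq_comp_l : forall a b e e', sl (@vsq_comp a b e) = @vcomp (sl a) (sl b) e';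
  vsq_comp_r : forall a b e e', sr (@vsq_comp a b e) = @vcomp (sr a) (sr b) e';

  hsq_comp_id_l : forall a e, @hsq_comp (hsq_id (sl a)) a e = a;
  hsq_comp_id_r : forall a e, @hsq_comp a (hsq_id (sr a)) e = a;
  hsq_comp_assoc : forall a b c e1 e2 e3 e4,
      @hsq_comp (@hsq_comp a b e1) c e2 = @hsq_comp a (@hsq_comp b c e3) e4;
  vsq_comp_id_l : forall a e, @vsq_comp (vsq_id (st a)) a e = a;
  vsq_comp_id_r : forall a e, @vsq_comp a (vsq_id (sb a)) e = a;
  vsq_comp_assoc : forall a b c e1 e2 e3 e4,
      @vsq_comp (@vsq_comp a b e1) c e2 = @vsq_comp a (@vsq_comp b c e3) e4;

  id_id : forall x, hsq_id (vid x) = vsq_id (hid x);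
  hsq_id_vcomp : forall u v e e',
      hsq_id (@vcomp u v e) = @vsq_comp (hsq_id u) (hsq_id v) e';
  vsq_id_hcomp : forall f g e e',
      vsq_id (@hcomp f g e) = @hsq_comp (vsq_id f) (vsq_id g) e';
  interchange : forall a b c d e1 e2 e3 e4 e5 e6,
      @vsq_comp (@hsq_comp a b e1) (@hsq_comp c d e2) e5 =
      @hsq_comp (@vsq_comp a c e3) (@vsq_comp b d e4) e6
}.

Record DblFunctor (A B : DblCat) := {
  fO : Ob A -> Ob B;
  fH : Hor A -> Hor B;
  fV : Ver A -> Ver B;
  fS : Sq A -> Sq B;
  fH_s : forall f, hs (fH f) = fO (hs f);
  fH_t : forall f, ht (fH f) = fO (ht f);
  fV_s : forall u, vs (fV u) = fO (vs u);
  fV_t : forall u, vt (fV u) = fO (vt u);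
  fS_l : forall a, sl (fS a) = fV (sl a);
  fS_r : forall a, sr (fS a) = fV (sr a);
  fS_t : forall a, st (fS a) = fH (st a);
  fS_b : forall a, sb (fS a) = fH (sb a);
  fH_id : forall x, fH (hid x) = hid (fO x);
  fH_comp : forall f g e e', fH (@hcomp A f g e) = @hcomp B (fH f) (fH g) e';
  fV_id : forall x, fV (vid x) = vid (fO x);
  fV_comp : forall u v e e', fV (@vcomp A u v e) = @vcomp B (fV u) (fV v) e';
  fS_hid : forall u, fS (hsq_id u) = hsq_id (fV u);
  fS_vid : forall f, fS (vsq_id f) = vsq_id (fH f);
  fS_hcomp : forall a b e e', fS (@hsq_comp A a b e) = @hsq_comp B (fS a) (fS b) e';
  fS_vcomp : forall a b e e', fS (@vsq_comp A a b e) = @vsq_comp B (fS a) (fS b) e'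
}.

Definition trivial_fibration (X Y : DblCat) (P : DblFunctor X Y) : Prop :=
  (forall y : Ob Y, exists x : Ob X, fO P x = y) /\
  (forall (x x' : Ob X) (g : Hor Y), hs g = fO P x -> ht g = fO P x' ->
     exists f : Hor X, [/\ hs f = x, ht f = x' & fH P f = g]) /\
  (forall v : Ver Y, exists u : Ver X, fV P u = v) /\
  (forall (f f' : Hor X) (u u' : Ver X) (b : Sq Y),
     hs f = vs u -> ht f = vs u' -> hs f' = vt u -> ht f' = vt u' ->
     st b = fH P f -> sb b = fH P f' -> sl b = fV P u -> sr b = fV P u' ->
     exists! a : Sq X, [/\ st a = f, sb a = f', sl a = u, sr a = u' & fS P a = b]).

(* Cofibrant: the unique double functor from the empty double category to A
   has the left lifting property against all trivial fibrations; i.e. every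
   double functor A -> Y lifts along every trivial fibration X -> Y. *)
Definition cofibrant (A : DblCat) : Prop :=
  forall (X Y : DblCat) (P : DblFunctor X Y), trivial_fibration P ->
  forall F : DblFunctor A Y, exists G : DblFunctor A X,
    [/\ forall x, fO P (fO G x) = fO F x,
        forall f, fH P (fH G f) = fH F f,
        forall u, fV P (fV G u) = fV F u &
        forall a, fS P (fS G a) = fS F a].

(* Categories (data suffices to speak of isomorphism of categories).          *)

Record CatData := {
  cOb : Type;
  cMor : Type;
  csrc : cMor -> cOb;  ctgt : cMor -> cOb;
  cid : cOb -> cMor;
  ccomp : forall f g : cMor, ctgt f = csrc g -> cMor
}.

Definition cat_iso (C D : CatData) : Prop :=
  exists (Fo : cOb C -> cOb D) (Fm : cMor C -> cMor D),
    [/\ (forall f, csrc (Fm f) = Fo (csrc f)),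
        (forall f, ctgt (Fm f) = Fo (ctgt f)),
        (forall x, Fm (cid x) = cid (Fo x)),
        (forall f g e e', Fm (@ccomp C f g e) = @ccomp D (Fm f) (Fm g) e') &
        bijective Fo /\ bijective Fm].

Definition UH (A : DblCat) : CatData :=
  {| cOb := Ob A; cMor := Hor A; csrc := @hs A; ctgt := @ht A;
     cid := @hid A; ccomp := @hcomp A |}.
Definition UV (A : DblCat) : CatData :=
  {| cOb := Ob A; cMor := Ver A; csrc := @vs A; ctgt := @vt A;
     cid := @vid A; ccomp := @vcomp A |}.

Record Graph := { gV : Type; gE : Type; gsrc : gE -> gV; gtgt : gE -> gV }.

Fixpoint chain (G : Graph) (v : gV G) (l : list (gE G)) : Prop :=
  match l with
  | nil => True
  | e :: l' => gsrc e = v /\ chain (gtgt e) l'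
  end.

Fixpoint path_end (G : Graph) (v : gV G) (l : list (gE G)) : gV G :=
  match l with
  | nil => v
  | e :: l' => path_end (gtgt e) l'
  end.

Record gpath (G : Graph) := { pstart : gV G; pedges : list (gE G);
                              pchain : chain pstart pedges }.

Lemma chain_app (G : Graph) (v : gV G) (l1 l2 : list (gE G)) :
  chain v l1 -> chain (path_end v l1) l2 -> chain v (l1 ++ l2).
Proof.
elim: l1 v => [|e l1 IH] v //= [-> H1] H2; split=> //; exact: IH.
Qed.

Definition path_comp (G : Graph) (p q : gpath G)
  (e : path_end (pstart p) (pedges p) = pstart q) : gpath G :=
  {| pstart := pstart p; pedges := pedges p ++ pedges q;
     pchain := chain_app (pchain p)
                 (eq_ind_r (fun z => chain z (pedges q)) (pchain q) e) |}.

Definition FreeCat (G : Graph) : CatData :=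
  {| cOb := gV G; cMor := gpath G;
     csrc := fun p => pstart p;
     ctgt := fun p => path_end (pstart p) (pedges p);
     cid := fun v => {| pstart := v; pedges := nil; pchain := I |};
     ccomp := @path_comp G |}.

Definition free_category (C : CatData) : Prop :=
  exists G : Graph, cat_iso (FreeCat G) C.

(* Disjoint union of copies of 1 and 2: component i is 2 = {0 -> 1} when
   k i = true and 1 when k i = false.  Objects are pairs (i, b) with b = false
   (the object 0, or the unique object of 1) or b = true (the object 1 of 2);
   there is exactly one morphism (i,b) -> (i',b') iff i = i' and b <= b'. *)
Definition sum12_Ob (I : Type) (k : I -> bool) : Type :=
  {p : I * bool | k p.1 || ~~ p.2}.

Definition sum12_Mor (I : Type) (k : I -> bool) : Type :=
  {ab : sum12_Ob k * sum12_Ob k |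
     (proj1_sig ab.1).1 = (proj1_sig ab.2).1 /\
     ((proj1_sig ab.1).2 ==> (proj1_sig ab.2).2) }.

Definition sum12_id (I : Type) (k : I -> bool) (x : sum12_Ob k) : sum12_Mor k :=
  exist _ (x, x) (conj erefl (implybb _)).

Lemma sum12_comp_ok (I : Type) (k : I -> bool) (f g : sum12_Mor k) :
  (proj1_sig f).2 = (proj1_sig g).1 ->
  (proj1_sig (proj1_sig f).1).1 = (proj1_sig (proj1_sig g).2).1 /\
  ((proj1_sig (proj1_sig f).1).2 ==> (proj1_sig (proj1_sig g).2).2).
Proof.
case: f => [[a b] /= [Hf1 Hf2]]; case: g => [[b' c] /= [Hg1 Hg2]] E.
subst b'; split; first by rewrite Hf1.
by move: Hf2 Hg2; case: (proj1_sig a).2; case: (proj1_sig b).2.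
Qed.

Definition sum12_comp (I : Type) (k : I -> bool) (f g : sum12_Mor k)
  (e : (proj1_sig f).2 = (proj1_sig g).1) : sum12_Mor k :=
  exist _ ((proj1_sig f).1, (proj1_sig g).2) (sum12_comp_ok e).

Definition Sum12 (I : Type) (k : I -> bool) : CatData :=
  {| cOb := sum12_Ob k; cMor := sum12_Mor k;
     csrc := fun f => (proj1_sig f).1; ctgt := fun f => (proj1_sig f).2;
     cid := @sum12_id I k; ccomp := @sum12_comp I k |}.

Definition disjoint_union_of_1_and_2 (C : CatData) : Prop :=
  exists (I : Type) (k : I -> bool), cat_iso (Sum12 k) C.

(* Main.v *)
Require Import Defs.
From mathcomp Require Import ssreflect ssrfun ssrbool.
From Stdlib Require Import List ProofIrrelevance ClassicalEpsilon Classical Lia PeanoNat.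
Set Implicit Arguments. Unset Strict Implicit. Unset Printing Implicit Defensive.

Definition tot {T} (P : Prop) (f : P -> T) (d : T) : T :=
  match excluded_middle_informative P with left e => f e | right _ => d end.
Lemma totE T (P:Prop) (f : P -> T) d (e : P) : tot f d = f e.
Proof. rewrite /tot; case: excluded_middle_informative => // e'.
  by rewrite (proof_irrelevance _ e e'). Qed.

Lemma sig_eqP T (P : T -> Prop) (a b : sig P) : proj1_sig a = proj1_sig b -> a = b.
Proof. case: a b => [x px] [y py] /= E; subst y; by rewrite (proof_irrelevance _ px py). Qed.

Section Tot.
Variable A : DblCat.
Definition tcH (f g : Hor A) := tot (@hcomp A f g) f.
Definition tcV (f g : Ver A) := tot (@vcomp A f g) f.
Definition tsH (a b : Sq A) := tot (@hsq_comp A a b) a.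
Definition tsV (a b : Sq A) := tot (@vsq_comp A a b) a.
Lemma tcHE f g e : @hcomp A f g e = tcH f g. Proof. by rewrite /tcH totE. Qed.
Lemma tcVE f g e : @vcomp A f g e = tcV f g. Proof. by rewrite /tcV totE. Qed.
Lemma tsHE f g e : @hsq_comp A f g e = tsH f g. Proof. by rewrite /tsH totE. Qed.
Lemma tsVE f g e : @vsq_comp A f g e = tsV f g. Proof. by rewrite /tsV totE. Qed.

Lemma tcH_s f g : ht f = hs g -> hs (tcH f g) = hs f.
Proof. move=> e; by rewrite -(tcHE e) hcomp_s. Qed.
Lemma tcH_t f g : ht f = hs g -> ht (tcH f g) = ht g.
Proof. move=> e; by rewrite -(tcHE e) hcomp_t. Qed.
Lemma tcH_idl f : tcH (hid (hs f)) f = f.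
Proof. have e : ht (hid (hs f)) = hs f by rewrite hid_t. by rewrite -(tcHE e) hcomp_id_l. Qed.
Lemma tcH_idr f : tcH f (hid (ht f)) = f.
Proof. have e : ht f = hs (hid (ht f)) by rewrite hid_s. by rewrite -(tcHE e) hcomp_id_r. Qed.
Lemma tcH_assoc f g h : ht f = hs g -> ht g = hs h -> tcH (tcH f g) h = tcH f (tcH g h).
Proof. move=> e1 e3.
have e2 : ht (hcomp e1) = hs h by rewrite hcomp_t.
have e4 : ht f = hs (hcomp e3) by rewrite hcomp_s.
have := @hcomp_assoc A f g h e1 e2 e3 e4. by rewrite !tcHE. Qed.

Lemma tcV_s f g : vt f = vs g -> vs (tcV f g) = vs f.
Proof. move=> e; by rewrite -(tcVE e) vcomp_s. Qed.
Lemma tcV_t f g : vt f = vs g -> vt (tcV f g) = vt g.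
Proof. move=> e; by rewrite -(tcVE e) vcomp_t. Qed.
Lemma tcV_idl f : tcV (vid (vs f)) f = f.
Proof. have e : vt (vid (vs f)) = vs f by rewrite vid_t. by rewrite -(tcVE e) vcomp_id_l. Qed.
Lemma tcV_idr f : tcV f (vid (vt f)) = f.
Proof. have e : vt f = vs (vid (vt f)) by rewrite vid_s. by rewrite -(tcVE e) vcomp_id_r. Qed.
Lemma tcV_assoc f g h : vt f = vs g -> vt g = vs h -> tcV (tcV f g) h = tcV f (tcV g h).
Proof. move=> e1 e3.
have e2 : vt (vcomp e1) = vs h by rewrite vcomp_t.
have e4 : vt f = vs (vcomp e3) by rewrite vcomp_s.
have := @vcomp_assoc A f g h e1 e2 e3 e4. by rewrite !tcVE. Qed.
End Tot.

Section TotS.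
Variable A : DblCat.
Implicit Types a b c d : Sq A.
Lemma tsH_l a b : sr a = sl b -> sl (tsH a b) = sl a.
Proof. move=> e; by rewrite -(tsHE e) hsq_comp_l. Qed.
Lemma tsH_r a b : sr a = sl b -> sr (tsH a b) = sr b.
Proof. move=> e; by rewrite -(tsHE e) hsq_comp_r. Qed.
Lemma tsH_t a b : sr a = sl b -> st (tsH a b) = tcH (st a) (st b).
Proof. move=> e; have e' : ht (st a) = hs (st b) by rewrite sq_tr e -sq_tl.
 by rewrite -(tsHE e) (hsq_comp_t e e') tcHE. Qed.
Lemma tsH_b a b : sr a = sl b -> sb (tsH a b) = tcH (sb a) (sb b).
Proof. move=> e; have e' : ht (sb a) = hs (sb b) by rewrite sq_br e -sq_bl.
 by rewrite -(tsHE e) (hsq_comp_b e e') tcHE. Qed.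
Lemma tsV_t a b : sb a = st b -> st (tsV a b) = st a.
Proof. move=> e; by rewrite -(tsVE e) vsq_comp_t. Qed.
Lemma tsV_b a b : sb a = st b -> sb (tsV a b) = sb b.
Proof. move=> e; by rewrite -(tsVE e) vsq_comp_b. Qed.
Lemma tsV_l a b : sb a = st b -> sl (tsV a b) = tcV (sl a) (sl b).
Proof. move=> e; have e' : vt (sl a) = vs (sl b) by rewrite -sq_bl e sq_tl.
 by rewrite -(tsVE e) (vsq_comp_l e e') tcVE. Qed.
Lemma tsV_r a b : sb a = st b -> sr (tsV a b) = tcV (sr a) (sr b).
Proof. move=> e; have e' : vt (sr a) = vs (sr b) by rewrite -sq_br e sq_tr.
 by rewrite -(tsVE e) (vsq_comp_r e e') tcVE. Qed.
Lemma tsH_idl a : tsH (hsq_id (sl a)) a = a.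
Proof. have e : sr (hsq_id (sl a)) = sl a by rewrite hsq_id_r. by rewrite -(tsHE e) hsq_comp_id_l. Qed.
Lemma tsH_idr a : tsH a (hsq_id (sr a)) = a.
Proof. have e : sr a = sl (hsq_id (sr a)) by rewrite hsq_id_l. by rewrite -(tsHE e) hsq_comp_id_r. Qed.
Lemma tsV_idl a : tsV (vsq_id (st a)) a = a.
Proof. have e : sb (vsq_id (st a)) = st a by rewrite vsq_id_b. by rewrite -(tsVE e) vsq_comp_id_l. Qed.
Lemma tsV_idr a : tsV a (vsq_id (sb a)) = a.
Proof. have e : sb a = st (vsq_id (sb a)) by rewrite vsq_id_t. by rewrite -(tsVE e) vsq_comp_id_r. Qed.
Lemma tsH_assoc a b c : sr a = sl b -> sr b = sl c -> tsH (tsH a b) c = tsH a (tsH b c).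
Proof. move=> e1 e3.
have e2 : sr (hsq_comp e1) = sl c by rewrite hsq_comp_r.
have e4 : sr a = sl (hsq_comp e3) by rewrite hsq_comp_l.
have := @hsq_comp_assoc A a b c e1 e2 e3 e4. by rewrite !tsHE. Qed.
Lemma tsV_assoc a b c : sb a = st b -> sb b = st c -> tsV (tsV a b) c = tsV a (tsV b c).
Proof. move=> e1 e3.
have e2 : sb (vsq_comp e1) = st c by rewrite vsq_comp_b.
have e4 : sb a = st (vsq_comp e3) by rewrite vsq_comp_t.
have := @vsq_comp_assoc A a b c e1 e2 e3 e4. by rewrite !tsVE. Qed.
Lemma hsq_id_tcV (u v : Ver A) : vt u = vs v -> hsq_id (tcV u v) = tsV (hsq_id u) (hsq_id v).
Proof. move=> e. have e' : sb (hsq_id u) = st (hsq_id v) by rewrite hsq_id_b hsq_id_t e.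
 by rewrite -(tcVE e) (hsq_id_vcomp e e') tsVE. Qed.
Lemma vsq_id_tcH (f g : Hor A) : ht f = hs g -> vsq_id (tcH f g) = tsH (vsq_id f) (vsq_id g).
Proof. move=> e. have e' : sr (vsq_id f) = sl (vsq_id g) by rewrite vsq_id_r vsq_id_l e.
 by rewrite -(tcHE e) (vsq_id_hcomp e e') tsHE. Qed.
Lemma interchangeT a b c d : sr a = sl b -> sr c = sl d -> sb a = st c -> sb b = st d ->
  tsV (tsH a b) (tsH c d) = tsH (tsV a c) (tsV b d).
Proof. move=> e1 e2 e3 e4.
have e5 : sb (hsq_comp e1) = st (hsq_comp e2).
  by rewrite (tsHE e1) (tsHE e2) tsH_b // tsH_t // e3 e4.
have e6 : sr (vsq_comp e3) = sl (vsq_comp e4).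
  by rewrite (tsVE e3) (tsVE e4) tsV_r // tsV_l // e1 e2.
have := @Defs.interchange A a b c d e1 e2 e3 e4 e5 e6. by rewrite (tsVE e5) (tsHE e6) !tsHE !tsVE. Qed.
End TotS.

Section X.
Variable A : DblCat.
Definition O' := (Ob A + (Ver A * bool))%type.
Definition pi (o : O') : Ob A :=
  match o with inl x => x | inr (u, b) => if b then vt u else vs u end.

Fixpoint walk (a : Ob A) (l : list (Hor A)) (b : Ob A) : Prop :=
  match l with nil => a = b | g :: l' => hs g = a /\ walk (ht g) l' b end.
Fixpoint cl (a : Ob A) (l : list (Hor A)) : Hor A :=
  match l with nil => hid a | g :: l' => tcH g (cl (ht g) l') end.

Lemma walk_app a l1 b l2 c : walk a l1 b -> walk b l2 c -> walk a (l1++l2) c.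
Proof. elim: l1 a => [|g l1 IH] a /=; first by move=> ->. by case=> -> W1 W2; split=> //; exact: IH W1 W2. Qed.
Lemma cl_s a l b : walk a l b -> hs (cl a l) = a.
Proof. elim: l a => [|g l IH] a /=; first by rewrite hid_s.
case=> E W. by rewrite tcH_s ?(IH _ W). Qed.
Lemma cl_t a l b : walk a l b -> ht (cl a l) = b.
Proof. elim: l a => [|g l IH] a /=; first by rewrite hid_t.
case=> E W. by rewrite tcH_t ?(IH _ W) ?(cl_s W). Qed.
Lemma cl_app a l1 b l2 c : walk a l1 b -> walk b l2 c ->
  cl a (l1++l2) = tcH (cl a l1) (cl b l2).
Proof. elim: l1 a => [|g l1 IH] a /=.
  move=> -> W2. by rewrite -{2}(cl_s W2) tcH_idl.
case=> E W1 W2. rewrite (IH _ W1 W2) tcH_assoc //. by rewrite (cl_s W1).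
by rewrite (cl_t W1) (cl_s W2). Qed.

Definition hwf (t : O' * list (Hor A) * O') :=
  walk (pi t.1.1) t.1.2 (pi t.2) /\ (t.1.2 = nil -> t.1.1 = t.2).
Definition HX := sig hwf.
Definition hsX (f : HX) := (proj1_sig f).1.1.
Definition hlX (f : HX) := (proj1_sig f).1.2.
Definition htX (f : HX) := (proj1_sig f).2.
Lemma hwfW f : walk (pi (hsX f)) (hlX f) (pi (htX f)). Proof. by case: f => [? []]. Qed.
Lemma hwfN f : hlX f = nil -> hsX f = htX f. Proof. by case: f => [? []]. Qed.
Lemma hX_eq f g : hsX f = hsX g -> hlX f = hlX g -> htX f = htX g -> f = g.
Proof. move=> E1 E2 E3; apply: sig_eqP. move: E1 E2 E3; rewrite /hsX /hlX /htX.
by case: (proj1_sig f) => [[? ?] ?]; case: (proj1_sig g) => [[? ?] ?] /= -> -> ->. Qed.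
Lemma hid_wf x : hwf (x, nil, x). Proof. by []. Qed.
Definition hidX x : HX := exist _ _ (hid_wf x).
Lemma hcomp_wf f g : htX f = hsX g -> hwf (hsX f, hlX f ++ hlX g, htX g).
Proof. move=> e; split=> /=. apply: walk_app (hwfW f) _. by rewrite e; apply: hwfW.
by case/app_eq_nil=> /hwfN -> /hwfN <-. Qed.
Definition hcompX f g (e : htX f = hsX g) : HX := exist _ _ (hcomp_wf e).
Definition thX f g := tot (@hcompX f g) f.
Lemma thXE f g (e : htX f = hsX g) : hcompX e = thX f g. Proof. by rewrite /thX totE. Qed.
Lemma thX_s f g : htX f = hsX g -> hsX (thX f g) = hsX f. Proof. by move=> e; rewrite -(thXE e). Qed.
Lemma thX_t f g : htX f = hsX g -> htX (thX f g) = htX g. Proof. by move=> e; rewrite -(thXE e). Qed.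
Lemma thX_l f g : htX f = hsX g -> hlX (thX f g) = hlX f ++ hlX g. Proof. by move=> e; rewrite -(thXE e). Qed.

Definition PH (f : HX) : Hor A := cl (pi (hsX f)) (hlX f).
Lemma PH_s f : hs (PH f) = pi (hsX f). Proof. exact: cl_s (hwfW f). Qed.
Lemma PH_t f : ht (PH f) = pi (htX f). Proof. exact: cl_t (hwfW f). Qed.
Lemma PH_hid x : PH (hidX x) = hid (pi x). Proof. by []. Qed.
Lemma PH_comp f g : htX f = hsX g -> PH (thX f g) = tcH (PH f) (PH g).
Proof. move=> e; rewrite /PH thX_s // thX_l //. have W : walk (pi (htX f)) (hlX g) (pi (htX g)) by rewrite e; apply: hwfW.
by rewrite (cl_app (hwfW f) W) e. Qed.

Definition VX := (O' + Ver A)%type.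
Definition vsX (u : VX) : O' := match u with inl o => o | inr u => inr (u, false) end.
Definition vtX (u : VX) : O' := match u with inl o => o | inr u => inr (u, true) end.
Definition vcX (u v : VX) : VX := match u with inl _ => v | inr _ => u end.
Definition PV (u : VX) : Ver A := match u with inl o => vid (pi o) | inr u => u end.
Lemma PV_s u : vs (PV u) = pi (vsX u). Proof. by case: u => [o|u] //=; rewrite vid_s. Qed.
Lemma PV_t u : vt (PV u) = pi (vtX u). Proof. by case: u => [o|u] //=; rewrite vid_t. Qed.
Lemma vcX_inr u v : vtX u = vsX v -> forall w, u = inr w -> v = inl (vtX u).
Proof. case: v => [o|v] e w Eu; subst u; simpl in *; [by rewrite e|discriminate]. Qed.
Lemma vcX_s u v : vtX u = vsX v -> vsX (vcX u v) = vsX u.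
Proof. case: u => [o|u] //= e. Qed.
Lemma vcX_t u v : vtX u = vsX v -> vtX (vcX u v) = vtX v.
Proof. case: u => [o|u] /= e //. by rewrite (@vcX_inr (inr u) v e u erefl). Qed.
Lemma PV_comp u v : vtX u = vsX v -> PV (vcX u v) = tcV (PV u) (PV v).
Proof. case: u => [o|u] /= e. by rewrite e -PV_s tcV_idl.
by rewrite (@vcX_inr (inr u) v e u erefl) /= tcV_idr. Qed.
Lemma vcX_idl v : vcX (inl (vsX v)) v = v. Proof. by []. Qed.
Lemma vcX_idr u : vcX u (inl (vtX u)) = u. Proof. by case: u. Qed.
Lemma vcX_assoc u v w : vcX (vcX u v) w = vcX u (vcX v w). Proof. by case: u. Qed.

Lemma thX_idl f : thX (hidX (hsX f)) f = f.
Proof. rewrite -(@thXE (hidX (hsX f)) f erefl). by apply: hX_eq. Qed.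
Lemma thX_idr f : thX f (hidX (htX f)) = f.
Proof. rewrite -(@thXE f (hidX (htX f)) erefl). apply: hX_eq => //=. by rewrite /hlX /= app_nil_r. Qed.
Lemma thX_assoc f g h : htX f = hsX g -> htX g = hsX h -> thX (thX f g) h = thX f (thX g h).
Proof. move=> e1 e2. apply: hX_eq.
- by rewrite !thX_s // ?thX_t // ?thX_s.
- by rewrite !thX_l ?app_assoc // ?thX_t // ?thX_s.
- by rewrite !thX_t // ?thX_t // ?thX_s.
Qed.

Record sqd := SQD {dt : HX; db : HX; dl : VX; dr : VX; ds : Sq A}.
Definition sqok (d : sqd) : Prop :=
 [/\ hsX (dt d) = vsX (dl d), htX (dt d) = vsX (dr d), hsX (db d) = vtX (dl d) & htX (db d) = vtX (dr d)] /\
 [/\ st (ds d) = PH (dt d), sb (ds d) = PH (db d), sl (ds d) = PV (dl d) & sr (ds d) = PV (dr d)].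
Definition SX := sig sqok.
Definition stX (a : SX) := dt (proj1_sig a).
Definition sbX (a : SX) := db (proj1_sig a).
Definition slX (a : SX) := dl (proj1_sig a).
Definition srX (a : SX) := dr (proj1_sig a).
Definition dsX (a : SX) := ds (proj1_sig a).
Lemma sX_eq a b : stX a = stX b -> sbX a = sbX b -> slX a = slX b -> srX a = srX b -> dsX a = dsX b -> a = b.
Proof. move: a b => [[? ? ? ? ?] ?] [[? ? ? ? ?] ?].
rewrite /stX /sbX /slX /srX /dsX /= => E1 E2 E3 E4 E5; apply: sig_eqP => /=. by rewrite E1 E2 E3 E4 E5. Qed.
Lemma X_tl a : hsX (stX a) = vsX (slX a). Proof. by case: a => [? [[]]]. Qed.
Lemma X_tr a : htX (stX a) = vsX (srX a). Proof. by case: a => [? [[]]]. Qed.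
Lemma X_bl a : hsX (sbX a) = vtX (slX a). Proof. by case: a => [? [[]]]. Qed.
Lemma X_br a : htX (sbX a) = vtX (srX a). Proof. by case: a => [? [[]]]. Qed.
Lemma ds_t a : st (dsX a) = PH (stX a). Proof. by case: a => [? [? []]]. Qed.
Lemma ds_b a : sb (dsX a) = PH (sbX a). Proof. by case: a => [? [? []]]. Qed.
Lemma ds_l a : sl (dsX a) = PV (slX a). Proof. by case: a => [? [? []]]. Qed.
Lemma ds_r a : sr (dsX a) = PV (srX a). Proof. by case: a => [? [? []]]. Qed.

Lemma hsqid_ok u : sqok (SQD (hidX (vsX u)) (hidX (vtX u)) u u (hsq_id (PV u))).
Proof. split; split=> //=; rewrite ?hsq_id_t ?hsq_id_b ?hsq_id_l ?hsq_id_r ?PV_s ?PV_t //. Qed.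
Definition hsq_idX u : SX := exist _ _ (hsqid_ok u).
Lemma vsqid_ok f : sqok (SQD f f (inl (hsX f)) (inl (htX f)) (vsq_id (PH f))).
Proof. split; split=> //=; rewrite ?vsq_id_t ?vsq_id_b ?vsq_id_l ?vsq_id_r ?PH_s ?PH_t //. Qed.
Definition vsq_idX f : SX := exist _ _ (vsqid_ok f).

Lemma hsqc_ok a b : srX a = slX b ->
  sqok (SQD (thX (stX a) (stX b)) (thX (sbX a) (sbX b)) (slX a) (srX b) (tsH (dsX a) (dsX b))).
Proof. move=> e.
have eT : htX (stX a) = hsX (stX b) by rewrite X_tr e X_tl.
have eB : htX (sbX a) = hsX (sbX b) by rewrite X_br e X_bl.
have eA : sr (dsX a) = sl (dsX b) by rewrite ds_r ds_l e.
split; split=> /=.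
- by rewrite thX_s // X_tl.
- by rewrite thX_t // X_tr.
- by rewrite thX_s // X_bl.
- by rewrite thX_t // X_br.
- by rewrite tsH_t // PH_comp // !ds_t.
- by rewrite tsH_b // PH_comp // !ds_b.
- by rewrite tsH_l // ds_l.
- by rewrite tsH_r // ds_r.
Qed.
Definition hsqX a b (e : srX a = slX b) : SX := exist _ _ (hsqc_ok e).
Lemma vsqc_ok a b : sbX a = stX b ->
  sqok (SQD (stX a) (sbX b) (vcX (slX a) (slX b)) (vcX (srX a) (srX b)) (tsV (dsX a) (dsX b))).
Proof. move=> e.
have eL : vtX (slX a) = vsX (slX b) by rewrite -X_bl e X_tl.
have eR : vtX (srX a) = vsX (srX b) by rewrite -X_br e X_tr.
have eA : sb (dsX a) = st (dsX b) by rewrite ds_b ds_t e.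
split; split=> /=.
- by rewrite vcX_s // X_tl.
- by rewrite vcX_s // X_tr.
- by rewrite vcX_t // X_bl.
- by rewrite vcX_t // X_br.
- by rewrite tsV_t // ds_t.
- by rewrite tsV_b // ds_b.
- by rewrite tsV_l // PV_comp // !ds_l.
- by rewrite tsV_r // PV_comp // !ds_r.
Qed.
Definition vsqX a b (e : sbX a = stX b) : SX := exist _ _ (vsqc_ok e).


Section Proj.
Variables (a b : SX) (u : VX) (f : HX).
Lemma p_st_h (e : srX a = slX b) : stX (hsqX e) = thX (stX a) (stX b). Proof. by []. Qed.
Lemma p_sb_h (e : srX a = slX b) : sbX (hsqX e) = thX (sbX a) (sbX b). Proof. by []. Qed.
Lemma p_sl_h (e : srX a = slX b) : slX (hsqX e) = slX a. Proof. by []. Qed.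
Lemma p_sr_h (e : srX a = slX b) : srX (hsqX e) = srX b. Proof. by []. Qed.
Lemma p_ds_h (e : srX a = slX b) : dsX (hsqX e) = tsH (dsX a) (dsX b). Proof. by []. Qed.
Lemma p_st_v (e : sbX a = stX b) : stX (vsqX e) = stX a. Proof. by []. Qed.
Lemma p_sb_v (e : sbX a = stX b) : sbX (vsqX e) = sbX b. Proof. by []. Qed.
Lemma p_sl_v (e : sbX a = stX b) : slX (vsqX e) = vcX (slX a) (slX b). Proof. by []. Qed.
Lemma p_sr_v (e : sbX a = stX b) : srX (vsqX e) = vcX (srX a) (srX b). Proof. by []. Qed.
Lemma p_ds_v (e : sbX a = stX b) : dsX (vsqX e) = tsV (dsX a) (dsX b). Proof. by []. Qed.
Lemma p_st_hi : stX (hsq_idX u) = hidX (vsX u). Proof. by []. Qed.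
Lemma p_sb_hi : sbX (hsq_idX u) = hidX (vtX u). Proof. by []. Qed.
Lemma p_sl_hi : slX (hsq_idX u) = u. Proof. by []. Qed.
Lemma p_sr_hi : srX (hsq_idX u) = u. Proof. by []. Qed.
Lemma p_ds_hi : dsX (hsq_idX u) = hsq_id (PV u). Proof. by []. Qed.
Lemma p_st_vi : stX (vsq_idX f) = f. Proof. by []. Qed.
Lemma p_sb_vi : sbX (vsq_idX f) = f. Proof. by []. Qed.
Lemma p_sl_vi : slX (vsq_idX f) = inl (hsX f). Proof. by []. Qed.
Lemma p_sr_vi : srX (vsq_idX f) = inl (htX f). Proof. by []. Qed.
Lemma p_ds_vi : dsX (vsq_idX f) = vsq_id (PH f). Proof. by []. Qed.
End Proj.
Definition pE := (p_st_h, p_sb_h, p_sl_h, p_sr_h, p_ds_h, p_st_v, p_sb_v, p_sl_v, p_sr_v, p_ds_v,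
  p_st_hi, p_sb_hi, p_sl_hi, p_sr_hi, p_ds_hi, p_st_vi, p_sb_vi, p_sl_vi, p_sr_vi, p_ds_vi).
Lemma XL_hid_s x : hsX (hidX x) = x. Proof. by []. Qed.
Lemma XL_hid_t x : htX (hidX x) = x. Proof. by []. Qed.
Lemma XL_hcomp_s f g (e : htX f = hsX g) : hsX (hcompX e) = hsX f. Proof. by []. Qed.
Lemma XL_hcomp_t f g (e : htX f = hsX g) : htX (hcompX e) = htX g. Proof. by []. Qed.
Lemma XL_hcomp_id_l f (e : htX (hidX (hsX f)) = hsX f) : hcompX e = f.
Proof. by rewrite thXE thX_idl. Qed.
Lemma XL_hcomp_id_r f (e : htX f = hsX (hidX (htX f))) : hcompX e = f.
Proof. by rewrite thXE thX_idr. Qed.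
Lemma XL_hcomp_assoc f g h (e1 : htX f = hsX g) (e2 : htX (hcompX e1) = hsX h)
  (e3 : htX g = hsX h) (e4 : htX f = hsX (hcompX e3)) :
  hcompX e2 = hcompX e4.
Proof. rewrite (thXE e2) (thXE e4) !(thXE e1) (thXE e3). exact: thX_assoc. Qed.
Lemma XL_vid_s (x : O') : vsX (inl x) = x. Proof. by []. Qed.
Lemma XL_vid_t (x : O') : vtX (inl x) = x. Proof. by []. Qed.
Lemma XL_vcomp_s u v (e : vtX u = vsX v) : vsX (vcX u v) = vsX u. Proof. exact: vcX_s. Qed.
Lemma XL_vcomp_t u v (e : vtX u = vsX v) : vtX (vcX u v) = vtX v. Proof. exact: vcX_t. Qed.
Lemma XL_vcomp_id_l u (e : vtX (inl (vsX u)) = vsX u) : vcX (inl (vsX u)) u = u. Proof. by []. Qed.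
Lemma XL_vcomp_id_r u (e : vtX u = vsX (inl (vtX u))) : vcX u (inl (vtX u)) = u. Proof. exact: vcX_idr. Qed.
Lemma XL_vcomp_assoc u v w (e1 : vtX u = vsX v) (e2 : vtX (vcX u v) = vsX w)
   (e3 : vtX v = vsX w) (e4 : vtX u = vsX (vcX v w)) : vcX (vcX u v) w = vcX u (vcX v w).
Proof. exact: vcX_assoc. Qed.

Lemma XL_hsq_comp_t a b (e : srX a = slX b) (e' : htX (stX a) = hsX (stX b)) :
  stX (hsqX e) = hcompX e'. Proof. by rewrite thXE. Qed.
Lemma XL_hsq_comp_b a b (e : srX a = slX b) (e' : htX (sbX a) = hsX (sbX b)) :
  sbX (hsqX e) = hcompX e'. Proof. by rewrite thXE. Qed.

Lemma XL_hsq_comp_id_l a (e : srX (hsq_idX (slX a)) = slX a) : hsqX e = a.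
Proof. apply: sX_eq; rewrite !pE.
- by rewrite -X_tl thX_idl.
- by rewrite -X_bl thX_idl.
- by [].
- by [].
- by rewrite -ds_l tsH_idl.
Qed.
Lemma XL_hsq_comp_id_r a (e : srX a = slX (hsq_idX (srX a))) : hsqX e = a.
Proof. apply: sX_eq; rewrite !pE.
- by rewrite -X_tr thX_idr.
- by rewrite -X_br thX_idr.
- by [].
- by [].
- by rewrite -ds_r tsH_idr.
Qed.
Lemma XL_vsq_comp_id_l a (e : sbX (vsq_idX (stX a)) = stX a) : vsqX e = a.
Proof. apply: sX_eq; rewrite !pE //. by rewrite -ds_t tsV_idl. Qed.
Lemma XL_vsq_comp_id_r a (e : sbX a = stX (vsq_idX (sbX a))) : vsqX e = a.
Proof. apply: sX_eq; rewrite !pE //.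
- by rewrite X_bl vcX_idr.
- by rewrite X_br vcX_idr.
- by rewrite -ds_b tsV_idr.
Qed.
Lemma XL_hsq_comp_assoc a b c (e1 : srX a = slX b) (e2 : srX (hsqX e1) = slX c)
  (e3 : srX b = slX c) (e4 : srX a = slX (hsqX e3)) : hsqX e2 = hsqX e4.
Proof. apply: sX_eq; rewrite !pE //.
-  apply: thX_assoc; by rewrite ?X_tr ?e1 ?e3 ?X_tl.
-  apply: thX_assoc; by rewrite ?X_br ?e1 ?e3 ?X_bl.
-  apply: tsH_assoc; by rewrite ?ds_r ?ds_l ?e1 ?e3.
Qed.
Lemma XL_vsq_comp_assoc a b c (e1 : sbX a = stX b) (e2 : sbX (vsqX e1) = stX c)
  (e3 : sbX b = stX c) (e4 : sbX a = stX (vsqX e3)) : vsqX e2 = vsqX e4.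
Proof. apply: sX_eq; rewrite !pE //.
- by rewrite vcX_assoc.
- by rewrite vcX_assoc.
-  apply: tsV_assoc; by rewrite ?ds_b ?ds_t ?e1 ?e3.
Qed.
Lemma XL_id_id x : hsq_idX (inl x) = vsq_idX (hidX x).
Proof. apply: sX_eq; rewrite !pE //. by rewrite id_id. Qed.
Lemma XL_hsq_id_vcomp u v (e : vtX u = vsX v) (e' : sbX (hsq_idX u) = stX (hsq_idX v)) :
  hsq_idX (vcX u v) = vsqX e'.
Proof. apply: sX_eq; rewrite !pE //.
- by rewrite vcX_s.
- by rewrite vcX_t.
- rewrite PV_comp // hsq_id_tcV //. by rewrite PV_t PV_s e.
Qed.
Lemma XL_vsq_id_hcomp f g (e : htX f = hsX g) (e' : srX (vsq_idX f) = slX (vsq_idX g)) :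
  vsq_idX (hcompX e) = hsqX e'.
Proof. apply: sX_eq; rewrite !pE //.
- by rewrite thXE.
- by rewrite thXE.
- rewrite thXE PH_comp // vsq_id_tcH //. by rewrite PH_t PH_s e.
Qed.
Lemma XL_interchange a b c d (e1 : srX a = slX b) (e2 : srX c = slX d)
  (e3 : sbX a = stX c) (e4 : sbX b = stX d)
  (e5 : sbX (hsqX e1) = stX (hsqX e2)) (e6 : srX (vsqX e3) = slX (vsqX e4)) :
  vsqX e5 = hsqX e6.
Proof. apply: sX_eq; rewrite !pE //.
 apply: interchangeT; by rewrite ?ds_r ?ds_l ?ds_b ?ds_t ?e1 ?e2 ?e3 ?e4.
Qed.

Definition XD : DblCat := {|
  Ob := O'; Hor := HX; hs := hsX; ht := htX; hid := hidX; hcomp := @hcompX;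
  Ver := VX; vs := vsX; vt := vtX; vid := @inl O' (Ver A);
  vcomp := fun u v (_ : vtX u = vsX v) => vcX u v;
  Sq := SX; sl := slX; sr := srX; st := stX; sb := sbX;
  hsq_id := hsq_idX; vsq_id := vsq_idX; hsq_comp := @hsqX; vsq_comp := @vsqX;
  sq_tl := X_tl; sq_tr := X_tr; sq_bl := X_bl; sq_br := X_br;
  hid_s := XL_hid_s; hid_t := XL_hid_t; hcomp_s := XL_hcomp_s; hcomp_t := XL_hcomp_t;
  hcomp_id_l := XL_hcomp_id_l; hcomp_id_r := XL_hcomp_id_r; hcomp_assoc := XL_hcomp_assoc;
  vid_s := XL_vid_s; vid_t := XL_vid_t; vcomp_s := XL_vcomp_s; vcomp_t := XL_vcomp_t;
  vcomp_id_l := XL_vcomp_id_l; vcomp_id_r := XL_vcomp_id_r; vcomp_assoc := XL_vcomp_assoc;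
  hsq_id_l := fun u => erefl; hsq_id_r := fun u => erefl;
  hsq_id_t := fun u => erefl; hsq_id_b := fun u => erefl;
  vsq_id_l := fun f => erefl; vsq_id_r := fun f => erefl;
  vsq_id_t := fun f => erefl; vsq_id_b := fun f => erefl;
  hsq_comp_l := fun a b e => erefl; hsq_comp_r := fun a b e => erefl;
  hsq_comp_t := XL_hsq_comp_t; hsq_comp_b := XL_hsq_comp_b;
  vsq_comp_t := fun a b e => erefl; vsq_comp_b := fun a b e => erefl;
  vsq_comp_l := fun a b e e' => erefl; vsq_comp_r := fun a b e e' => erefl;
  hsq_comp_id_l := XL_hsq_comp_id_l; hsq_comp_id_r := XL_hsq_comp_id_r;
  hsq_comp_assoc := XL_hsq_comp_assoc;
  vsq_comp_id_l := XL_vsq_comp_id_l; vsq_comp_id_r := XL_vsq_comp_id_r;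
  vsq_comp_assoc := XL_vsq_comp_assoc;
  id_id := XL_id_id; hsq_id_vcomp := XL_hsq_id_vcomp; vsq_id_hcomp := XL_vsq_id_hcomp;
  Defs.interchange := XL_interchange |}.

Definition PXF : DblFunctor XD A.
Proof.
refine (@Build_DblFunctor XD A pi PH PV dsX PH_s PH_t PV_s PV_t ds_l ds_r ds_t ds_b
  (fun x => erefl) _ (fun x => erefl) _ (fun u => erefl) (fun f => erefl) _ _).
- move=> f g e e' /=. by rewrite thXE PH_comp // tcHE.
- move=> u v e e' /=. by rewrite PV_comp // tcVE.
- move=> a b e e' /=. by rewrite tsHE.
- move=> a b e e' /=. by rewrite tsVE.
Defined.

Lemma PXF_tf : trivial_fibration PXF.
Proof.
split; [|split; [|split]].
- move=> y. by exists (inl y).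
- move=> x x' g /= E1 E2.
  have W : hwf (x, g :: nil, x') by split=> //=.
  exists (exist _ _ W); split=> //=. rewrite /PH /= tcH_idr. done.
- move=> v. by exists (inr v).
- move=> f f' u u' b /= E1 E2 E3 E4 E5 E6 E7 E8.
  have ok : sqok (SQD f f' u u' b) by split; split.
  exists (exist _ _ ok); split=> //.
  move=> a' [F1 F2 F3 F4 F5]. apply: sX_eq => //.
Qed.
End X.

Lemma inj_surj_bij (T U : Type) (f : T -> U) :
  injective f -> (forall y, exists x, f x = y) -> bijective f.
Proof. move=> inj sur.
pose g y := proj1_sig (constructive_indefinite_description _ (sur y)).
have gK : cancel g f by move=> y; rewrite /g; case: constructive_indefinite_description.
exists g => //. move=> x; apply: inj; by rewrite gK. Qed.

Lemma gpath_eq (G : Graph) (p q : gpath G) : pstart p = pstart q -> pedges p = pedges q -> p = q.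
Proof. case: p q => [s l c] [s' l' c'] /= E1 E2; subst. by rewrite (proof_irrelevance _ c c'). Qed.

Section Free.
Variable A : DblCat.
Variable len : Hor A -> nat.
Hypothesis P0 : forall h, len h = 0 -> h = hid (hs h).
Hypothesis Padd : forall f g, ht f = hs g -> len (tcH f g) = len f + len g.
Hypothesis Pref : forall f g f' g' : Hor A, ht f = hs g -> ht f' = hs g' -> tcH f g = tcH f' g' ->
  (exists c, hs c = ht f' /\ f = tcH f' c) \/ (exists c, hs c = ht f /\ f' = tcH f c).
Hypothesis Pcan : forall f g g' : Hor A, ht f = hs g -> ht f = hs g' -> tcH f g = tcH f g' -> g = g'.

Definition atom (h : Hor A) := 0 < len h /\
  (forall f g : Hor A, ht f = hs g -> tcH f g = h -> len f = 0 \/ len g = 0).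
Definition Gr : Graph := {| gV := Ob A; gE := {h | atom h};
  gsrc := fun e => hs (proj1_sig e); gtgt := fun e => ht (proj1_sig e) |}.

Fixpoint cm (v : Ob A) (l : list (gE Gr)) : Hor A :=
  match l with nil => hid v | e :: l => tcH (proj1_sig e) (cm (ht (proj1_sig e)) l) end.

Lemma cm_s (v : Ob A) (l : list (gE Gr)) : @chain Gr v l -> hs (cm v l) = v.
Proof. elim: l v => [|e l IH] v /=; first by rewrite hid_s.
case=> E C. rewrite tcH_s; first by []. by rewrite (IH _ C). Qed.
Lemma cm_t (v : Ob A) (l : list (gE Gr)) : @chain Gr v l -> ht (cm v l) = @path_end Gr v l.
Proof. elim: l v => [|e l IH] v /=; first by rewrite hid_t.
case=> E C. rewrite tcH_t; first exact: IH. by rewrite (cm_s C). Qed.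
Lemma cm_app (v : Ob A) (l1 l2 : list (gE Gr)) : @chain Gr v l1 -> @chain Gr (@path_end Gr v l1) l2 ->
  cm v (l1 ++ l2) = tcH (cm v l1) (cm (@path_end Gr v l1) l2).
Proof. elim: l1 v => [|e l IH] v /=.
  move=> _ C. by rewrite -{2}(cm_s C) tcH_idl.
case=> E C1 C2. rewrite (IH _ C1 C2) tcH_assoc //. by rewrite (cm_s C1).
by rewrite (cm_t C1) (cm_s C2). Qed.
Lemma cm_len (v : Ob A) (l : list (gE Gr)) : @chain Gr v l -> len (cm v l) = 0 -> l = nil.
Proof. case: l => [|e l] //= [E C]. rewrite Padd; last by rewrite (cm_s C).
have := proj1 (proj2_sig e). lia. Qed.

Lemma hid_len v : len (hid v) = 0.
Proof. have := Padd (f:=hid v) (g:=hid v). rewrite hid_t hid_s => /(_ erefl).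
have := tcH_idl (hid v). rewrite hid_s => ->. lia. Qed.

Lemma atom_pos (e : gE Gr) : 0 < len (proj1_sig e). Proof. by case: e => h [H1 H2]. Qed.

Lemma atom_pref (e e' : gE Gr) c : hs c = ht (proj1_sig e') ->
  proj1_sig e = tcH (proj1_sig e') c -> e = e'.
Proof. move=> Hc E. case: (proj2 (proj2_sig e) (proj1_sig e') c (esym Hc) (esym E)).
  move=> H; have := atom_pos e'; lia.
move/P0=> Ec. apply: sig_eqP. by rewrite E Ec Hc tcH_idr. Qed.

Lemma cm_inj (v : Ob A) (l l' : list (gE Gr)) : @chain Gr v l -> @chain Gr v l' -> cm v l = cm v l' -> l = l'.
Proof.
elim: l v l' => [|e l IH] v l' /=.
  move=> _ C' E. symmetry; apply: (cm_len C'). by rewrite -E hid_len.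
case=> E C; case: l' => [|e' l'] /=.
  move=> _ E'. have := cm_len (v:=v) (l:=e::l). rewrite /= E' hid_len. by move=> /(_ (conj E C) erefl).
case=> E' C' Eq.
have h1 : ht (proj1_sig e) = hs (cm (ht (proj1_sig e)) l) by rewrite (cm_s C).
have h2 : ht (proj1_sig e') = hs (cm (ht (proj1_sig e')) l') by rewrite (cm_s C').
have ee : e = e'.
  case: (Pref h1 h2 Eq) => [[c [Hc Ec]]|[c [Hc Ec]]].
  - exact: atom_pref Hc Ec.
  - symmetry; exact: atom_pref Hc Ec.
subst e'. congr cons. apply: (IH _ _ C C'). exact: Pcan h1 h2 Eq.
Qed.

Lemma cm_surj n : forall h, len h <= n -> exists l, @chain Gr (hs h) l /\ cm (hs h) l = h.
Proof.
elim: n => [|n IH] h Hn.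
  exists nil; split=> //=. symmetry; apply: P0; lia.
case: (Nat.eq_dec (len h) 0) => H0.
  exists nil; split=> //=. by rewrite -P0.
case: (classic (atom h)) => Ha.
  exists ((exist _ h Ha : gE Gr) :: nil); split=> //=. by rewrite tcH_idr.
have [f [g [Efg [Ec [Hf Hg]]]]] : exists f g, ht f = hs g /\ tcH f g = h /\ 0 < len f /\ 0 < len g.
  apply: NNPP => N; apply: Ha; split; first lia.
  move=> f g e1 e2. apply: NNPP => N2; apply: N; exists f, g; split=> //; split=> //; lia.
have Lh := Padd Efg; rewrite Ec in Lh.
have [lf [Cf Ef]] := IH f ltac:(lia).
have [lg [Cg Eg]] := IH g ltac:(lia).
have Hs : hs h = hs f by rewrite -Ec tcH_s.
have Pe : @path_end Gr (hs f) lf = hs g by rewrite -(cm_t Cf) Ef.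
exists (lf ++ lg); rewrite Hs; split.
  apply: chain_app Cf _. by rewrite Pe.
rewrite cm_app // ?Pe // Ef Eg //.
Qed.

Lemma free_UH : free_category (UH A).
Proof.
exists Gr. exists id, (fun p : gpath Gr => cm (pstart p) (pedges p)).
have Fs : forall p : gpath Gr, hs (cm (pstart p) (pedges p)) = pstart p.
  move=> p; exact: cm_s (pchain p).
split=> //=.
- move=> p; exact: cm_t (pchain p).
- move=> p q e e'. rewrite cm_app.
  + rewrite tcHE; congr tcH; exact: (f_equal (fun v => cm v (pedges q)) e).
  + exact: pchain.
  + exact: (eq_ind_r (fun z => chain z (pedges q)) (pchain q) e).
- split; first by exists id.
  apply: inj_surj_bij.
  + move=> p q E. have Es : pstart p = pstart q by rewrite -Fs E Fs.
    apply: gpath_eq => //. apply: (cm_inj (pchain p)). by rewrite Es; apply: pchain.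
    by rewrite {2}Es.
  + move=> h. have [l [C E]] := cm_surj (le_n (len h)).
    by exists (@Build_gpath Gr (hs h) l C).
Qed.
End Free.

Definition kb (P : Prop) : bool := if excluded_middle_informative P then true else false.
Lemma kbT (P : Prop) : kb P = true -> P. Proof. by rewrite /kb; case: excluded_middle_informative. Qed.
Lemma kbI (P : Prop) : P -> kb P = true. Proof. by rewrite /kb; case: excluded_middle_informative. Qed.

Section Sum.
Variable A : DblCat.
Definition nid (u : Ver A) := u <> vid (vs u).
Hypothesis H2 : forall u v, nid u -> nid v -> vt u = vs v -> False.
Hypothesis H3 : forall u v, nid u -> nid v -> vs u = vs v -> u = v.
Hypothesis H4 : forall u v, nid u -> nid v -> vt u = vt v -> u = v.

Definition I := {x : Ob A | ~ exists v, nid v /\ vt v = x}.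
Definition hasout (x : Ob A) := exists u, nid u /\ vs u = x.
Definition k (i : I) : bool := kb (hasout (proj1_sig i)).
Definition outu (x : Ob A) : Ver A :=
  match excluded_middle_informative (hasout x) with
  | left H => proj1_sig (constructive_indefinite_description _ H)
  | right _ => vid x end.
Lemma outu_spec x : hasout x -> nid (outu x) /\ vs (outu x) = x.
Proof. rewrite /outu; case: excluded_middle_informative => // H _.
by case: constructive_indefinite_description. Qed.
Lemma outu_eq u : nid u -> outu (vs u) = u.
Proof. move=> N. have [N' E] := outu_spec (ex_intro _ u (conj N erefl)). exact: H3. Qed.

Definition Fo' (p : I * bool) : Ob A := if p.2 then vt (outu (proj1_sig p.1)) else proj1_sig p.1.
Definition Fo (o : sum12_Ob k) : Ob A := Fo' (proj1_sig o).
Definition msrc (m : sum12_Mor k) : I * bool := proj1_sig (proj1_sig m).1.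
Definition mtgt (m : sum12_Mor k) : I * bool := proj1_sig (proj1_sig m).2.
Definition Fm (m : sum12_Mor k) : Ver A :=
  if ~~ (msrc m).2 && (mtgt m).2 then outu (proj1_sig (msrc m).1) else vid (Fo' (msrc m)).

Lemma m_same m : (msrc m).1 = (mtgt m).1 /\ ((msrc m).2 ==> (mtgt m).2).
Proof. by case: m => [[o1 o2] pr]. Qed.
Lemma o_ok (o : sum12_Ob k) : k (proj1_sig o).1 || ~~ (proj1_sig o).2. Proof. by case: o. Qed.
Lemma m_tgt_ok m : k (mtgt m).1 || ~~ (mtgt m).2. Proof. exact: o_ok. Qed.

Lemma Fm_s m : vs (Fm m) = Fo (proj1_sig m).1.
Proof. rewrite /Fm /Fo -/(msrc m).
case: (m_same m) (m_tgt_ok m); case: (msrc m) => [i1 b1]; case: (mtgt m) => [i2 b2] /= E Imp ok.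
subst i2. case: b1 b2 Imp ok => [] [] //= _; rewrite ?vid_s //.
rewrite orbF => /kbT H. by have [_ ->] := outu_spec H. Qed.
Lemma Fm_t m : vt (Fm m) = Fo (proj1_sig m).2.
Proof. rewrite /Fm /Fo -/(msrc m) -/(mtgt m).
case: (m_same m) (m_tgt_ok m); case: (msrc m) => [i1 b1]; case: (mtgt m) => [i2 b2] /= E Imp ok.
subst i2. by case: b1 b2 Imp ok => [] [] //= _; rewrite ?vid_t. Qed.

Lemma notI_tgt (i : I) u : nid u -> vt u = proj1_sig i -> False.
Proof. case: i => x Hx /= N E; apply: Hx; by exists u. Qed.

Lemma Fo'_inj (o o' : sum12_Ob k) : Fo o = Fo o' -> o = o'.
Proof. case: o o' => [[i b] ok] [[i' b'] ok'] /=. rewrite /Fo /Fo' /=.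
move=> E; apply: sig_eqP => /=.
case: b b' ok ok' E => [] [] /=; rewrite ?orbF ?orbT => ok ok' E.
- have [N1 S1] := outu_spec (kbT ok). have [N2 S2] := outu_spec (kbT ok').
  have := H4 N1 N2 E => Eu. have : proj1_sig i = proj1_sig i' by rewrite -S1 Eu S2.
  by move/sig_eqP ->.
- have [N1 S1] := outu_spec (kbT ok). by case: (notI_tgt N1 E).
- have [N2 S2] := outu_spec (kbT ok'). by case: (notI_tgt N2 (esym E)).
- by move/sig_eqP: E => ->.
Qed.

Lemma Fo_surj x : exists o : sum12_Ob k, Fo o = x.
Proof.
case: (classic (exists v, nid v /\ vt v = x)) => [[v [N E]]|N].
- have Hi : ~ exists w, nid w /\ vt w = vs v by case=> w [Nw Ew]; exact: H2 Nw N Ew.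
  pose i : I := exist _ (vs v) Hi.
  have ok : k i || ~~ true by rewrite /k /= kbI //; exists v.
  exists (exist _ (i, true) ok). by rewrite /Fo /Fo' /= outu_eq.
- pose i : I := exist _ x N.
  have ok : k i || ~~ false by rewrite orbT.
  by exists (exist _ (i, false) ok).
Qed.

Lemma Fm_inj : injective Fm.
Proof. move=> m m' E.
have E1 : (proj1_sig m).1 = (proj1_sig m').1 by apply: Fo'_inj; rewrite -!Fm_s E.
have E2 : (proj1_sig m).2 = (proj1_sig m').2 by apply: Fo'_inj; rewrite -!Fm_t E.
apply: sig_eqP. move: E1 E2; case: (proj1_sig m) => ? ?; case: (proj1_sig m') => ? ? /= -> ->. done.
Qed.

Lemma Fm_id (o : sum12_Ob k) : Fm (sum12_id o) = vid (Fo o).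
Proof. rewrite /Fm /msrc /mtgt /=. by case: (proj1_sig o).2; rewrite ?andbN. Qed.

Lemma Fm_surj u : exists m, Fm m = u.
Proof.
case: (classic (nid u)) => N.
- have Hi : ~ exists w, nid w /\ vt w = vs u by case=> w [Nw Ew]; exact: H2 Nw N Ew.
  pose i : I := exist _ (vs u) Hi.
  have ok1 : k i || ~~ false by rewrite orbT.
  have ok2 : k i || ~~ true by rewrite /k /= kbI //; exists u.
  pose o1 : sum12_Ob k := exist _ (i, false) ok1.
  pose o2 : sum12_Ob k := exist _ (i, true) ok2.
  have pr : (proj1_sig o1).1 = (proj1_sig o2).1 /\ ((proj1_sig o1).2 ==> (proj1_sig o2).2) by [].
  exists (exist _ (o1, o2) pr). by rewrite /Fm /msrc /mtgt /= outu_eq.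
- have Eu : u = vid (vs u) by apply: NNPP.
  have [o Eo] := Fo_surj (vs u).
  exists (sum12_id o). by rewrite Fm_id Eo -Eu.
Qed.

Lemma tcV_idr' (u : Ver A) x : vt u = x -> tcV u (vid x) = u.
Proof. move=> <-; exact: tcV_idr. Qed.
Lemma tcV_idl' (u : Ver A) x : vs u = x -> tcV (vid x) u = u.
Proof. move=> <-; exact: tcV_idl. Qed.
Lemma Fm_comp (f g : sum12_Mor k) (e : (proj1_sig f).2 = (proj1_sig g).1) e' :
  Fm (sum12_comp e) = @vcomp A (Fm f) (Fm g) e'.
Proof.
rewrite tcVE.
have Ss : msrc (sum12_comp e) = msrc f by [].
have St : mtgt (sum12_comp e) = mtgt g by [].
have Em : mtgt f = msrc g by rewrite /mtgt /msrc e.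
have Fsf := Fm_s f. have Ftf := Fm_t f. have Fsg := Fm_s g. have Ftg := Fm_t g.
rewrite /Fo -/(msrc f) -/(mtgt f) in Fsf Ftf. rewrite /Fo -/(msrc g) -/(mtgt g) in Fsg Ftg.
move: Fsf Ftf Fsg Ftg. rewrite /Fm Ss St.
case: (m_same f) (m_same g) (m_tgt_ok g) => E1 I1 [E2 I2] okg.
rewrite -Em in E2 I2 *.
move: E1 I1 E2 I2 okg. case: (msrc f) => [i1 b1]; case: (mtgt f) => [i2 b2]; case: (mtgt g) => [i3 b3] /=.
move=> E1 I1 E2 I2 okg. subst i2 i3.
case: b1 b2 b3 I1 I2 okg => [] [] [] //= _ _ okg Fsf Ftf Fsg Ftg.
- by rewrite tcV_idr' // vid_t.
- by rewrite tcV_idr'.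
- by rewrite tcV_idl'.
- by rewrite tcV_idr' // vid_t.
Qed.

Lemma sum_UV : disjoint_union_of_1_and_2 (UV A).
Proof.
exists I, k, Fo, Fm. split.
- exact: Fm_s.
- exact: Fm_t.
- exact: Fm_id.
- move=> f g e e'. exact: Fm_comp.
- split; apply: inj_surj_bij.
  + exact: Fo'_inj.
  + exact: Fo_surj.
  + exact: Fm_inj.
  + exact: Fm_surj.
Qed.
End Sum.

Definition idF (A : DblCat) : DblFunctor A A.
Proof.
refine (@Build_DblFunctor A A id id id id (fun _ => erefl) (fun _ => erefl) (fun _ => erefl)
  (fun _ => erefl) (fun _ => erefl) (fun _ => erefl) (fun _ => erefl) (fun _ => erefl)
  (fun _ => erefl) _ (fun _ => erefl) _ (fun _ => erefl) (fun _ => erefl) _ _) => /=.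
- move=> f g e e'; by rewrite (proof_irrelevance _ e e').
- move=> f g e e'; by rewrite (proof_irrelevance _ e e').
- move=> f g e e'; by rewrite (proof_irrelevance _ e e').
- move=> f g e e'; by rewrite (proof_irrelevance _ e e').
Defined.

Lemma walk_split (A : DblCat) (a : Ob A) l1 l2 c : walk a (l1 ++ l2) c -> exists b, walk a l1 b /\ walk b l2 c.
Proof. elim: l1 a => [|g l IH] a /=; first by move=> W; exists a.
case=> E W. have [b [W1 W2]] := IH _ W. by exists b. Qed.
Lemma walk_det (A : DblCat) (a : Ob A) l b b' : walk a l b -> walk a l b' -> b = b'.
Proof. elim: l a => [|g l IH] a /=; first by move=> <- <-.
case=> _ W [_ W']; exact: IH W W'. Qed.

Section Fwd.
Variable A : DblCat.
Variable G : DblFunctor A (XD A).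
Hypothesis HO : forall x, pi (fO G x) = x.
Hypothesis HH : forall f, PH (fH G f) = f.
Hypothesis HV : forall u, PV (fV G u) = u.

Definition L (h : Hor A) := hlX (fH G h).
Lemma Gs h : hsX (fH G h) = fO G (hs h). Proof. exact: (fH_s G h). Qed.
Lemma Gt h : htX (fH G h) = fO G (ht h). Proof. exact: (fH_t G h). Qed.
Lemma LW h : walk (hs h) (L h) (ht h).
Proof. have := hwfW (fH G h). by rewrite Gs Gt !HO. Qed.
Lemma LC h : cl (hs h) (L h) = h.
Proof. have := HH h. by rewrite /PH Gs HO. Qed.
Lemma Lc (f g : Hor A) : ht f = hs g -> L (tcH f g) = L f ++ L g.
Proof. move=> e. rewrite -(tcHE e).
have e' : htX (fH G f) = hsX (fH G g) by rewrite Gt Gs e.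
rewrite /L (@fH_comp _ _ G f g e e'). by []. Qed.

Definition len h := length (L h).
Lemma LP0 h : len h = 0 -> h = hid (hs h).
Proof. rewrite /len => /length_zero_iff_nil E. by rewrite -{1}(LC h) E. Qed.
Lemma LPadd (f g : Hor A) : ht f = hs g -> len (tcH f g) = len f + len g.
Proof. move=> e; by rewrite /len Lc // length_app. Qed.
Lemma LPref1 (f g f' g' : Hor A) r : ht f = hs g -> ht f' = hs g' -> tcH f g = tcH f' g' ->
  L f = L f' ++ r -> exists c, hs c = ht f' /\ f = tcH f' c.
Proof.
move=> e1 e2 E Er.
have Hs : hs f = hs f' by rewrite -(tcH_s e1) E tcH_s.
have W := LW f. rewrite Er Hs in W. have [b [W1 W2]] := walk_split W.
have Eb := walk_det W1 (LW f'). subst b.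
exists (cl (ht f') r); split; first exact: cl_s W2.
by rewrite -{1}(LC f) Er Hs (cl_app W1 W2) LC.
Qed.
Lemma LPref (f g f' g' : Hor A) : ht f = hs g -> ht f' = hs g' -> tcH f g = tcH f' g' ->
  (exists c, hs c = ht f' /\ f = tcH f' c) \/ (exists c, hs c = ht f /\ f' = tcH f c).
Proof.
move=> e1 e2 E. have := f_equal L E. rewrite !Lc // => /app_eq_app [r [[E1 _]|[E1 _]]].
- left; exact: LPref1 e1 e2 E E1.
- right; exact: LPref1 e2 e1 (esym E) E1.
Qed.
Lemma LPcan (f g g' : Hor A) : ht f = hs g -> ht f = hs g' -> tcH f g = tcH f g' -> g = g'.
Proof. move=> e1 e2 E. have := f_equal L E. rewrite !Lc // => /app_inv_head Eg.
by rewrite -(LC g) -(LC g') Eg -e1 -e2. Qed.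

Lemma Gnid (u : Ver A) : nid u -> fV G u = inr u.
Proof. move=> N. have := HV u. case: (fV G u) (fV_s G u) => [o|w] /= Es Eu.
- exfalso; apply: N. have : vs u = pi o by rewrite -Eu vid_s. by move=> ->.
- by rewrite Eu.
Qed.
Lemma Gnid_s (u : Ver A) : nid u -> fO G (vs u) = inr (u, false).
Proof. move=> N. by rewrite -(fV_s G u) Gnid. Qed.
Lemma Gnid_t (u : Ver A) : nid u -> fO G (vt u) = inr (u, true).
Proof. move=> N. by rewrite -(fV_t G u) Gnid. Qed.
Lemma LH2 (u v : Ver A) : nid u -> nid v -> vt u = vs v -> False.
Proof. move=> Nu Nv E. have := Gnid_t Nu. by rewrite E Gnid_s. Qed.
Lemma LH3 (u v : Ver A) : nid u -> nid v -> vs u = vs v -> u = v.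
Proof. move=> Nu Nv E. have := Gnid_s Nu. rewrite E Gnid_s //. by case. Qed.
Lemma LH4 (u v : Ver A) : nid u -> nid v -> vt u = vt v -> u = v.
Proof. move=> Nu Nv E. have := Gnid_t Nu. rewrite E Gnid_t //. by case. Qed.
End Fwd.

Lemma forward (A : DblCat) : cofibrant A -> free_category (UH A) /\ disjoint_union_of_1_and_2 (UV A).
Proof.
move=> C. have [G [HO HH HV _]] := C (XD A) A (PXF A) (PXF_tf A) (idF A).
split.
- apply: (free_UH (len := len G)).
  + exact: LP0 HO HH.
  + exact: LPadd.
  + exact: LPref HO HH.
  + exact: LPcan HO HH.
- apply: sum_UV.
  + exact: LH2 HV.
  + exact: LH3 HV.
  + exact: LH4 HV.
Qed.

Section FunT.
Variables (A B : DblCat) (F : DblFunctor A B).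
Lemma fH_tc (f g : Hor A) : ht f = hs g -> fH F (tcH f g) = tcH (fH F f) (fH F g).
Proof. move=> e. have e' : ht (fH F f) = hs (fH F g) by rewrite fH_s fH_t e.
by rewrite -(tcHE e) (@fH_comp _ _ F f g e e') tcHE. Qed.
Lemma fV_tc (f g : Ver A) : vt f = vs g -> fV F (tcV f g) = tcV (fV F f) (fV F g).
Proof. move=> e. have e' : vt (fV F f) = vs (fV F g) by rewrite fV_s fV_t e.
by rewrite -(tcVE e) (@fV_comp _ _ F f g e e') tcVE. Qed.
Lemma fS_tsH (a b : Sq A) : sr a = sl b -> fS F (tsH a b) = tsH (fS F a) (fS F b).
Proof. move=> e. have e' : sr (fS F a) = sl (fS F b) by rewrite fS_l fS_r e.
by rewrite -(tsHE e) (@fS_hcomp _ _ F a b e e') tsHE. Qed.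
Lemma fS_tsV (a b : Sq A) : sb a = st b -> fS F (tsV a b) = tsV (fS F a) (fS F b).
Proof. move=> e. have e' : sb (fS F a) = st (fS F b) by rewrite fS_t fS_b e.
by rewrite -(tsVE e) (@fS_vcomp _ _ F a b e e') tsVE. Qed.
End FunT.

Section SumInv.
Variables (A : DblCat) (I : Type) (k : I -> bool) (Vo : sum12_Ob k -> Ob A) (Vm : sum12_Mor k -> Ver A).
Hypothesis c1 : forall m, vs (Vm m) = Vo (proj1_sig m).1.
Hypothesis c2 : forall m, vt (Vm m) = Vo (proj1_sig m).2.
Hypothesis c3 : forall o, Vm (sum12_id o) = vid (Vo o).
Hypothesis Voi : injective Vo.
Hypothesis Vms : forall u, exists m, Vm m = u.

Lemma mor_shape (m : sum12_Mor k) : (proj1_sig m).1 = (proj1_sig m).2 \/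
  ((proj1_sig (proj1_sig m).1).2 = false /\ (proj1_sig (proj1_sig m).2).2 = true).
Proof. case: m => [[o1 o2] [E Imp]] /=. move: E Imp.
case: o1 => [[i1 b1] ok1]; case: o2 => [[i2 b2] ok2] /= E; subst i2.
case: b1 b2 ok1 ok2 => [] [] //= ok1 ok2 _; [left|right|left]; by [apply: sig_eqP|].
Qed.
Lemma nid_shape u : nid u -> exists m, Vm m = u /\
  (proj1_sig (proj1_sig m).1).2 = false /\ (proj1_sig (proj1_sig m).2).2 = true.
Proof. move=> N. have [m Em] := Vms u. exists m; split=> //.
case: (mor_shape m) => // E. exfalso; apply: N.
have Hm : m = sum12_id (proj1_sig m).1.
  apply: sig_eqP. move: E; case: (proj1_sig m) => o1 o2 /= ->. done.
by rewrite -Em Hm c3 vid_s.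
Qed.
Lemma same_i (m : sum12_Mor k) : (proj1_sig (proj1_sig m).1).1 = (proj1_sig (proj1_sig m).2).1.
Proof. by case: m => [[o1 o2] [E Imp]]. Qed.

Lemma SH2 (u v : Ver A) : nid u -> nid v -> vt u = vs v -> False.
Proof. move=> Nu Nv E. have [m [Em [_ Tm]]] := nid_shape Nu. have [n [En [Sn _]]] := nid_shape Nv.
move: E. rewrite -Em -En c2 c1 => /Voi E. by rewrite E Sn in Tm. Qed.
Lemma SH3 (u v : Ver A) : nid u -> nid v -> vs u = vs v -> u = v.
Proof. move=> Nu Nv E. have [m [Em [Sm Tm]]] := nid_shape Nu. have [n [En [Sn Tn]]] := nid_shape Nv.
move: E. rewrite -Em -En !c1 => /Voi E. congr Vm. apply: sig_eqP.
have E2 : (proj1_sig m).2 = (proj1_sig n).2.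
  apply: sig_eqP. move: (same_i m) (same_i n) Tm Tn. rewrite E.
  case: (proj1_sig (proj1_sig m).2) => ? ?; case: (proj1_sig (proj1_sig n).2) => ? ? /= <- <- -> ->. done.
move: E E2. case: (proj1_sig m) => ? ?; case: (proj1_sig n) => ? ? /= -> ->. done.
Qed.
Lemma SH4 (u v : Ver A) : nid u -> nid v -> vt u = vt v -> u = v.
Proof. move=> Nu Nv E. have [m [Em [Sm Tm]]] := nid_shape Nu. have [n [En [Sn Tn]]] := nid_shape Nv.
move: E. rewrite -Em -En !c2 => /Voi E. congr Vm. apply: sig_eqP.
have E1 : (proj1_sig m).1 = (proj1_sig n).1.
  apply: sig_eqP. move: (same_i m) (same_i n) Sm Sn. rewrite E.
  case: (proj1_sig (proj1_sig m).1) => ? ?; case: (proj1_sig (proj1_sig n).1) => ? ? /= -> -> -> ->. done.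
move: E E1. case: (proj1_sig m) => ? ?; case: (proj1_sig n) => ? ? /= -> ->. done.
Qed.
End SumInv.

Definition pick T (Q : T -> Prop) (H : exists x, Q x) : T :=
  proj1_sig (constructive_indefinite_description _ H).
Lemma pickP T (Q : T -> Prop) (H : exists x, Q x) : Q (pick H).
Proof. rewrite /pick; by case: constructive_indefinite_description. Qed.

Section Lift.
Variables (A X Y : DblCat) (P : DblFunctor X Y) (F : DblFunctor A Y).
Hypothesis TO : forall y : Ob Y, exists x : Ob X, fO P x = y.
Hypothesis TH : forall (x x' : Ob X) (g : Hor Y), hs g = fO P x -> ht g = fO P x' ->
     exists f : Hor X, [/\ hs f = x, ht f = x' & fH P f = g].
Hypothesis TV : forall v : Ver Y, exists u : Ver X, fV P u = v.
Hypothesis TS : forall (f f' : Hor X) (u u' : Ver X) (b : Sq Y),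
     hs f = vs u -> ht f = vs u' -> hs f' = vt u -> ht f' = vt u' ->
     st b = fH P f -> sb b = fH P f' -> sl b = fV P u -> sr b = fV P u' ->
     exists! a : Sq X, [/\ st a = f, sb a = f', sl a = u, sr a = u' & fS P a = b].
Hypothesis H2 : forall u v : Ver A, nid u -> nid v -> vt u = vs v -> False.
Hypothesis H3 : forall u v : Ver A, nid u -> nid v -> vs u = vs v -> u = v.
Hypothesis H4 : forall u v : Ver A, nid u -> nid v -> vt u = vt v -> u = v.

Definition wv (u : Ver A) : Ver X := pick (TV (fV F u)).
Lemma wvP u : fV P (wv u) = fV F u. Proof. exact: (pickP (TV (fV F u))). Qed.
Definition dflt (x : Ob A) : Ob X := pick (TO (fO F x)).
Definition hasin (x : Ob A) := exists u, nid u /\ vt u = x.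
Definition inu (x : Ob A) : Ver A :=
  match excluded_middle_informative (hasin x) with left H => pick H | right _ => vid x end.
Lemma inu_spec x : hasin x -> nid (inu x) /\ vt (inu x) = x.
Proof. rewrite /inu; case: excluded_middle_informative => // H _. exact: (pickP H). Qed.
Lemma inu_eq u : nid u -> inu (vt u) = u.
Proof. move=> N. have [N' E] := inu_spec (ex_intro _ u (conj N erefl)). exact: H4. Qed.

Definition DO (x : Ob A) : Ob X :=
  match excluded_middle_informative (hasout x) with
  | left _ => vs (wv (outu x))
  | right _ => match excluded_middle_informative (hasin x) with
               | left _ => vt (wv (inu x)) | right _ => dflt x end end.
Lemma DO_s u : nid u -> DO (vs u) = vs (wv u).
Proof. move=> N; rewrite /DO; case: excluded_middle_informative => H.
- by rewrite (outu_eq H3 N).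
- by case: H; exists u.
Qed.
Lemma DO_t u : nid u -> DO (vt u) = vt (wv u).
Proof. move=> N; rewrite /DO; case: excluded_middle_informative => [[v [Nv Ev]]|_].
- by case: (H2 N Nv (esym Ev)).
case: excluded_middle_informative => H.
- by rewrite inu_eq.
- by case: H; exists u.
Qed.
Lemma DO_P x : fO P (DO x) = fO F x.
Proof. rewrite /DO; case: excluded_middle_informative => H.
- have [N E] := outu_spec H. by rewrite -(fV_s P) wvP fV_s E.
case: excluded_middle_informative => H'.
- have [N E] := inu_spec H'. by rewrite -(fV_t P) wvP fV_t E.
- exact: (pickP (TO (fO F x))).
Qed.

Definition DV (u : Ver A) : Ver X :=
  match excluded_middle_informative (nid u) with left _ => wv u | right _ => vid (DO (vs u)) end.
Lemma DV_n u : nid u -> DV u = wv u.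
Proof. by rewrite /DV; case: excluded_middle_informative. Qed.
Lemma DV_nn u : ~ nid u -> DV u = vid (DO (vs u)).
Proof. by rewrite /DV; case: excluded_middle_informative. Qed.
Lemma nnid (u : Ver A) : ~ nid u -> u = vid (vs u). Proof. move=> N; exact: NNPP. Qed.
Lemma nnid_t (u : Ver A) : ~ nid u -> vt u = vs u. Proof. by move/nnid => {1}->; rewrite vid_t. Qed.
Lemma DV_s u : vs (DV u) = DO (vs u).
Proof. case: (classic (nid u)) => N; first by rewrite DV_n // DO_s. by rewrite DV_nn // vid_s. Qed.
Lemma DV_t u : vt (DV u) = DO (vt u).
Proof. case: (classic (nid u)) => N; first by rewrite DV_n // DO_t. by rewrite DV_nn // vid_t nnid_t. Qed.
Lemma DV_P u : fV P (DV u) = fV F u.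
Proof. case: (classic (nid u)) => N; first by rewrite DV_n // wvP.
by rewrite DV_nn // fV_id DO_P -fV_id -nnid. Qed.
Lemma DV_id x : DV (vid x) = vid (DO x).
Proof. rewrite DV_nn ?vid_s //. by rewrite /nid vid_s. Qed.
Lemma DV_comp u v : vt u = vs v -> DV (tcV u v) = tcV (DV u) (DV v).
Proof. move=> e. case: (classic (nid u)) => Nu; case: (classic (nid v)) => Nv.
- by case: (H2 Nu Nv e).
- have Ev : v = vid (vt u) by rewrite e; exact: nnid.
  rewrite Ev tcV_idr DV_id DV_n // tcV_idr' //; by rewrite DO_t.
- have Eu : u = vid (vs v) by rewrite -e nnid_t // -nnid.
  rewrite Eu tcV_idl DV_id -DV_s tcV_idl. done.
- have Eu : u = vid (vs v) by rewrite -e nnid_t // -nnid.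
  rewrite Eu tcV_idl DV_id -DV_s tcV_idl. done.
Qed.

Variables (Gg : Graph) (Fo : gV Gg -> Ob A) (Fm : gpath Gg -> Hor A).
Hypothesis Fs : forall p, hs (Fm p) = Fo (pstart p).
Hypothesis Ft : forall p, ht (Fm p) = Fo (path_end (pstart p) (pedges p)).
Hypothesis Fid : forall v, Fm (@Build_gpath Gg v nil Logic.I) = hid (Fo v).
Hypothesis Fcomp : forall (p q : gpath Gg) (e : path_end (pstart p) (pedges p) = pstart q) e',
  Fm (path_comp e) = @hcomp A (Fm p) (Fm q) e'.
Hypothesis Foi : injective Fo.
Hypothesis Fob : bijective Fo.
Hypothesis Fmb : bijective Fm.

Definition single (e : gE Gg) : gpath Gg := @Build_gpath Gg (gsrc e) (e :: nil) (conj erefl Logic.I).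
Definition he e := Fm (single e).
Lemma he_s e : hs (he e) = Fo (gsrc e). Proof. exact: Fs. Qed.
Lemma he_t e : ht (he e) = Fo (gtgt e). Proof. exact: Ft. Qed.
Lemma le_ex e : exists f : Hor X, [/\ hs f = DO (Fo (gsrc e)), ht f = DO (Fo (gtgt e)) & fH P f = fH F (he e)].
Proof. apply: TH; by rewrite ?fH_s ?fH_t DO_P ?he_s ?he_t. Qed.
Definition le e := pick (le_ex e).
Lemma le_spec e : [/\ hs (le e) = DO (Fo (gsrc e)), ht (le e) = DO (Fo (gtgt e)) & fH P (le e) = fH F (he e)].
Proof. exact: (pickP (le_ex e)). Qed.

Fixpoint Lp (v : gV Gg) (l : list (gE Gg)) : Hor X :=
  match l with nil => hid (DO (Fo v)) | e :: l => tcH (le e) (Lp (gtgt e) l) end.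
Lemma Lp_s v l : chain v l -> hs (Lp v l) = DO (Fo v).
Proof. elim: l v => [|e l IH] v /=; first by rewrite hid_s.
case=> E C. have [S T _] := le_spec e. rewrite tcH_s ?S ?E //. by rewrite T (IH _ C). Qed.
Lemma Lp_t v l : chain v l -> ht (Lp v l) = DO (Fo (path_end v l)).
Proof. elim: l v => [|e l IH] v /=; first by rewrite hid_t.
case=> E C. have [S T _] := le_spec e. rewrite tcH_t ?(IH _ C) //. by rewrite T (Lp_s C). Qed.
Lemma Lp_app v l1 l2 : chain v l1 -> chain (path_end v l1) l2 ->
  Lp v (l1 ++ l2) = tcH (Lp v l1) (Lp (path_end v l1) l2).
Proof. elim: l1 v => [|e l IH] v /=.
  move=> _ C. by rewrite -(Lp_s C) tcH_idl.
case=> E C1 C2. have [S T _] := le_spec e. rewrite (IH _ C1 C2) tcH_assoc //.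
by rewrite T (Lp_s C1). by rewrite (Lp_t C1) (Lp_s C2). Qed.
Lemma Lp_P (p : gpath Gg) : fH P (Lp (pstart p) (pedges p)) = fH F (Fm p).
Proof. case: p => v l c /=. elim: l v c => [|e l IH] v c /=.
- have -> : @Build_gpath Gg v nil c = @Build_gpath Gg v nil Logic.I by apply: gpath_eq.
  by rewrite Fid fH_id DO_P fH_id.
- case: c => E c.
  have ep : path_end (pstart (single e)) (pedges (single e)) = pstart (@Build_gpath Gg (gtgt e) l c) by [].
  have -> : @Build_gpath Gg v (e :: l) (conj E c) = path_comp ep by apply: gpath_eq.
  have e' : ht (Fm (single e)) = hs (Fm (@Build_gpath Gg (gtgt e) l c)) by rewrite Fs Ft.
  have [S T Pe] := le_spec e.
  rewrite (Fcomp ep e') tcHE fH_tc; last by rewrite T (Lp_s c).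
  rewrite fH_tc; last exact: e'.
  by rewrite Pe (IH _ c).
Qed.

Lemma bij_ex : exists g, cancel Fm g /\ cancel g Fm.
Proof. case: Fmb => g h1 h2; by exists g. Qed.
Definition Fmi := proj1_sig (constructive_indefinite_description _ bij_ex).
Lemma FmK : cancel Fm Fmi. Proof. rewrite /Fmi; case: constructive_indefinite_description => g []. done. Qed.
Lemma FmiK : cancel Fmi Fm. Proof. rewrite /Fmi; case: constructive_indefinite_description => g []. done. Qed.

Definition DH (h : Hor A) : Hor X := Lp (pstart (Fmi h)) (pedges (Fmi h)).
Lemma DH_s h : hs (DH h) = DO (hs h).
Proof. by rewrite /DH (Lp_s (pchain _)) -Fs FmiK. Qed.
Lemma DH_t h : ht (DH h) = DO (ht h).
Proof. by rewrite /DH (Lp_t (pchain _)) -Ft FmiK. Qed.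
Lemma DH_P h : fH P (DH h) = fH F h.
Proof. by rewrite /DH Lp_P FmiK. Qed.
Lemma DH_id x : DH (hid x) = hid (DO x).
Proof. have [Foi' FoK FoiK] := Fob.
have E : Fmi (hid x) = @Build_gpath Gg (Foi' x) nil Logic.I.
  by rewrite -(FmK (@Build_gpath Gg (Foi' x) nil Logic.I)) Fid FoiK.
by rewrite /DH E /= FoiK. Qed.
Lemma DH_comp (f g : Hor A) : ht f = hs g -> DH (tcH f g) = tcH (DH f) (DH g).
Proof. move=> e.
have ep : path_end (pstart (Fmi f)) (pedges (Fmi f)) = pstart (Fmi g).
  apply: Foi. by rewrite -Ft -Fs !FmiK.
have e' : ht (Fm (Fmi f)) = hs (Fm (Fmi g)) by rewrite !FmiK.
have E : Fmi (tcH f g) = path_comp ep by rewrite -{1}(FmiK f) -{1}(FmiK g) -(tcHE e') -Fcomp FmK.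
rewrite /DH E /= Lp_app; [| exact: pchain | by rewrite ep; exact: pchain].
by rewrite ep.
Qed.

Lemma DS_ex (a : Sq A) : exists! a' : Sq X,
  [/\ st a' = DH (st a), sb a' = DH (sb a), sl a' = DV (sl a), sr a' = DV (sr a) & fS P a' = fS F a].
Proof. apply: TS.
- by rewrite DH_s DV_s sq_tl.
- by rewrite DH_t DV_s sq_tr.
- by rewrite DH_s DV_t sq_bl.
- by rewrite DH_t DV_t sq_br.
- by rewrite fS_t DH_P.
- by rewrite fS_b DH_P.
- by rewrite fS_l DV_P.
- by rewrite fS_r DV_P.
Qed.
Definition DS (a : Sq A) : Sq X := pick (DS_ex a).
Lemma DS_spec a : [/\ st (DS a) = DH (st a), sb (DS a) = DH (sb a), sl (DS a) = DV (sl a),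
  sr (DS a) = DV (sr a) & fS P (DS a) = fS F a].
Proof. by have [] := pickP (DS_ex a). Qed.
Lemma DS_uniq a a' : st a' = DH (st a) -> sb a' = DH (sb a) -> sl a' = DV (sl a) ->
  sr a' = DV (sr a) -> fS P a' = fS F a -> DS a = a'.
Proof. move=> *. have [_ U] := pickP (DS_ex a). by apply: U; split. Qed.

Definition Dfun : DblFunctor A X.
Proof.
refine (@Build_DblFunctor A X DO DH DV DS DH_s DH_t DV_s DV_t
  (fun a => let: And5 _ _ h _ _ := DS_spec a in h)
  (fun a => let: And5 _ _ _ h _ := DS_spec a in h)
  (fun a => let: And5 h _ _ _ _ := DS_spec a in h)
  (fun a => let: And5 _ h _ _ _ := DS_spec a in h)
  DH_id _ DV_id _ _ _ _ _).
- move=> f g e e'. by rewrite !tcHE DH_comp.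
- move=> u v e e'. by rewrite !tcVE DV_comp.
- move=> u. apply: DS_uniq.
  + by rewrite hsq_id_t hsq_id_t DH_id DV_s.
  + by rewrite hsq_id_b hsq_id_b DH_id DV_t.
  + by rewrite !hsq_id_l.
  + by rewrite !hsq_id_r.
  + by rewrite fS_hid DV_P fS_hid.
- move=> f. apply: DS_uniq.
  + by rewrite !vsq_id_t.
  + by rewrite !vsq_id_b.
  + by rewrite !vsq_id_l DV_id DH_s.
  + by rewrite !vsq_id_r DV_id DH_t.
  + by rewrite fS_vid DH_P fS_vid.
- move=> a b e e'. rewrite !tsHE.
  have [Ta Ba La Ra Pa] := DS_spec a. have [Tb Bb Lb Rb Pb] := DS_spec b.
  have eT : ht (st a) = hs (st b) by rewrite sq_tr e sq_tl.
  have eB : ht (sb a) = hs (sb b) by rewrite sq_br e sq_bl.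
  have eD : sr (DS a) = sl (DS b) by rewrite Ra Lb e.
  apply: DS_uniq.
  + by rewrite !tsH_t // Ta Tb DH_comp.
  + by rewrite !tsH_b // Ba Bb DH_comp.
  + by rewrite !tsH_l.
  + by rewrite !tsH_r.
  + by rewrite fS_tsH // Pa Pb fS_tsH.
- move=> a b e e'. rewrite !tsVE.
  have [Ta Ba La Ra Pa] := DS_spec a. have [Tb Bb Lb Rb Pb] := DS_spec b.
  have eL : vt (sl a) = vs (sl b) by rewrite -sq_bl e sq_tl.
  have eR : vt (sr a) = vs (sr b) by rewrite -sq_br e sq_tr.
  have eD : sb (DS a) = st (DS b) by rewrite Ba Tb e.
  apply: DS_uniq.
  + by rewrite !tsV_t.
  + by rewrite !tsV_b.
  + by rewrite !tsV_l // La Lb DV_comp.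
  + by rewrite !tsV_r // Ra Rb DV_comp.
  + by rewrite fS_tsV // Pa Pb fS_tsV.
Defined.

Lemma Dfun_lifts : [/\ forall x, fO P (fO Dfun x) = fO F x,
        forall f, fH P (fH Dfun f) = fH F f,
        forall u, fV P (fV Dfun u) = fV F u &
        forall a, fS P (fS Dfun a) = fS F a].
Proof. split.
- exact: DO_P.
- exact: DH_P.
- exact: DV_P.
- move=> a; by have [] := DS_spec a.
Qed.
End Lift.

Lemma backward (A : DblCat) : free_category (UH A) /\ disjoint_union_of_1_and_2 (UV A) -> cofibrant A.
Proof.
case=> [[Gg [Fo [Fm [Fs Ft Fid Fcomp [Fob Fmb]]]]] [I0 [k [Vo [Vm [c1 c2 c3 c4 [Vob Vmb]]]]]]].
have Voi : injective Vo by apply: bij_inj.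
have Vms : forall u, exists m, Vm m = u.
  case: Vmb => g _ gK u. by exists (g u).
have H2 := SH2 c1 c2 c3 Voi Vms.
have H3 := SH3 c1 c3 Voi Vms.
have H4 := SH4 c2 c3 Voi Vms.
move=> X Y P [TO [TH [TV TS]]] F.
have Foi : injective Fo by apply: bij_inj.
eexists; exact: (Dfun_lifts F TO TH TV TS H2 H3 H4 Fs Ft Fid Fcomp Foi Fob Fmb).
Qed.


Theorem proposition4p11 (A : DblCat) :
  cofibrant A <-> free_category (UH A) /\ disjoint_union_of_1_and_2 (UV A).
Proof. split; [exact: forward | exact: backward]. Qed.
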